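(* Let $A\in\mathbb{R}^{n\times m}$ have distinct columns with $a_1=0$. The following are equivalent: (1) for every $c\in\mathbb{R}^m$, the signomial $f=\mathrm{Sig}(A,c)$ satisfies $f^\star=f_{\mathsf{SAGE}}$; (2) $C_{\mathrm{NNS}}(A)=C_{\mathrm{SAGE}}(A)$; (3) $\{v\in C_{\mathrm{SAGE}}(A)^\dagger: v_1=1\}\subset\mathrm{cl}\,\mathrm{conv}\,\exp\mathcal{R}(A^\top)$.
   Context: For $c\in\mathbb{R}^m$, $\mathrm{Sig}(A,c)$ denotes $x\mapsto\sum_{i=1}^m c_i\exp(a_i^\top x)$. $C_{\mathrm{NNS}}(A)=\{c:\mathrm{Sig}(A,c)(x)\ge 0\ \forall x\in\mathbb{R}^n\}$, $C_{\mathrm{AGE}}(A,k)=\{c\in C_{\mathrm{NNS}}(A): c_i\ge 0\ \forall i\ne k\}$, $C_{\mathrm{SAGE}}(A)=\sum_{k=1}^m C_{\mathrm{AGE}}(A,k)$. For $f=\mathrm{Sig}(A,c)$: $f^\star=\inf_{x}f(x)$ and $f_{\mathsf{SAGE}}=\sup\{\gamma\in\mathbb{R}: c-\gamma e_1\in C_{\mathrm{SAGE}}(A)\}$. $K^\dagger=\{y: y^\top x\ge 0\ \forall x\in K\}$ is the dual cone. $\mathcal{R}(A^\top)=\{A^\top x: x\in\mathbb{R}^n\}\subset\mathbb{R}^m$ is the range of $A^\top$, $\exp$ is applied entrywise to vectors and elementwise to sets, and $\mathrm{cl}\,\mathrm{conv}$ is the closed convex hull. *)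

(* Defs.v *)
From Stdlib Require Import Reals Lra Lia.
Open Scope R_scope.

(* Vectors in R^k are functions nat -> R; only entries with index < k matter.
   A matrix A in R^{n x m} is A : nat -> nat -> R, entry (i,j) = A i j,
   i < n, j < m; column j is a_j. Index 0 corresponds to the paper's index 1. *)

Fixpoint sumR (k : nat) (f : nat -> R) : R :=
  match k with
  | O => 0
  | S k' => sumR k' f + f k'
  end.

Definition colDot (n : nat) (A : nat -> nat -> R) (j : nat) (x : nat -> R) : R :=
  sumR n (fun i => A i j * x i).

Definition Sig (n m : nat) (A : nat -> nat -> R) (c : nat -> R) (x : nat -> R) : R :=
  sumR m (fun j => c j * exp (colDot n A j x)).

Definition C_NNS (n m : nat) (A : nat -> nat -> R) (c : nat -> R) : Prop :=
  forall x : nat -> R, 0 <= Sig n m A c x.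

Definition C_AGE (n m : nat) (A : nat -> nat -> R) (k : nat) (c : nat -> R) : Prop :=
  C_NNS n m A c /\ (forall i, (i < m)%nat -> i <> k -> 0 <= c i).

Definition C_SAGE (n m : nat) (A : nat -> nat -> R) (c : nat -> R) : Prop :=
  exists cs : nat -> nat -> R,
    (forall k, (k < m)%nat -> C_AGE n m A k (cs k)) /\
    (forall i, (i < m)%nat -> c i = sumR m (fun k => cs k i)).

Inductive ExtR : Type := Fin (r : R) | PInf | MInf.

Definition is_sup_ext (E : R -> Prop) (v : ExtR) : Prop :=
  match v with
  | Fin l => is_lub E l
  | PInf => forall M, exists x, E x /\ M < x
  | MInf => forall x, ~ E x
  end.

Definition is_inf_ext (E : R -> Prop) (v : ExtR) : Prop :=
  match v with
  | Fin l => (forall x, E x -> l <= x) /\ (forall b, (forall x, E x -> b <= x) -> b <= l)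
  | MInf => forall M, exists x, E x /\ x < M
  | PInf => forall x, ~ E x
  end.

Definition e1 (i : nat) : R := if Nat.eqb i 0 then 1 else 0.

Definition f_star_is (n m : nat) (A : nat -> nat -> R) (c : nat -> R) (v : ExtR) : Prop :=
  is_inf_ext (fun y => exists x, y = Sig n m A c x) v.

Definition f_SAGE_is (n m : nat) (A : nat -> nat -> R) (c : nat -> R) (v : ExtR) : Prop :=
  is_sup_ext (fun g => C_SAGE n m A (fun i => c i - g * e1 i)) v.

Definition C_SAGE_dual (n m : nat) (A : nat -> nat -> R) (v : nat -> R) : Prop :=
  forall c, C_SAGE n m A c -> 0 <= sumR m (fun i => v i * c i).

Definition conv_exp_range (n m : nat) (A : nat -> nat -> R) (w : nat -> R) : Prop :=
  exists (N : nat) (lam : nat -> R) (xs : nat -> nat -> R),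
    (forall k, (k < N)%nat -> 0 <= lam k) /\
    sumR N lam = 1 /\
    (forall j, (j < m)%nat -> w j = sumR N (fun k => lam k * exp (colDot n A j (xs k)))).

Definition cl_conv_exp_range (n m : nat) (A : nat -> nat -> R) (v : nat -> R) : Prop :=
  forall eps, 0 < eps ->
    exists w, conv_exp_range n m A w /\ (forall j, (j < m)%nat -> Rabs (v j - w j) < eps).

(* Main.v *)
Require Import Defs.
From Stdlib Require Import Reals Lra Lia Classical ClassicalEpsilon List.
Open Scope R_scope.

Lemma sumR_ext k f g : (forall i, (i < k)%nat -> f i = g i) -> sumR k f = sumR k g.
Proof. induction k; simpl; intros H; [reflexivity|]. rewrite IHk by (intros; apply H; lia). rewrite H by lia. reflexivity. Qed.

Lemma sumR_plus k f g : sumR k (fun i => f i + g i) = sumR k f + sumR k g.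
Proof. induction k; simpl; [lra|]. rewrite IHk. lra. Qed.

Lemma sumR_scal k a f : sumR k (fun i => a * f i) = a * sumR k f.
Proof. induction k; simpl; [lra|]. rewrite IHk. lra. Qed.

Lemma sumR_minus k f g : sumR k (fun i => f i - g i) = sumR k f - sumR k g.
Proof. induction k; simpl; [lra|]. rewrite IHk. lra. Qed.

Lemma sumR_zero k f : (forall i, (i < k)%nat -> f i = 0) -> sumR k f = 0.
Proof. intros H. rewrite (sumR_ext k f (fun _ => 0)) by auto. induction k; simpl; [lra|]. rewrite IHk by (intros; apply H; lia). lra. Qed.

Lemma sumR_le k f g : (forall i, (i < k)%nat -> f i <= g i) -> sumR k f <= sumR k g.
Proof. induction k; simpl; intros H; [lra|]. specialize (IHk (fun i Hi => H i ltac:(lia))). specialize (H k ltac:(lia)). lra. Qed.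

Lemma sumR_nonneg k f : (forall i, (i < k)%nat -> 0 <= f i) -> 0 <= sumR k f.
Proof. intros H. rewrite <- (sumR_zero k (fun _ => 0)) by auto. apply sumR_le. auto. Qed.

Lemma sumR_abs k f : Rabs (sumR k f) <= sumR k (fun i => Rabs (f i)).
Proof. induction k; simpl. rewrite Rabs_R0; lra. eapply Rle_trans; [apply Rabs_triang|]. lra. Qed.

Lemma sumR_term k f j : (forall i, (i < k)%nat -> 0 <= f i) -> (j < k)%nat -> f j <= sumR k f.
Proof. induction k; intros H Hj; [lia|]. simpl. destruct (Nat.eq_dec j k).
 - subst. assert (0 <= sumR k f) by (apply sumR_nonneg; intros; apply H; lia). lra.
 - assert (f j <= sumR k f) by (apply IHk; [intros; apply H; lia| lia]). specialize (H k ltac:(lia)). lra. Qed.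

Lemma sumR_swap a b f : sumR a (fun i => sumR b (fun j => f i j)) = sumR b (fun j => sumR a (fun i => f i j)).
Proof. induction a; simpl. symmetry; apply sumR_zero; auto. rewrite IHa. rewrite <- sumR_plus. reflexivity. Qed.

Lemma sumR_point k j a : (j < k)%nat -> sumR k (fun i => if Nat.eqb i j then a else 0) = a.
Proof. induction k; intros Hj; [lia|]. simpl. destruct (Nat.eq_dec j k).
 - subst. rewrite Nat.eqb_refl. rewrite sumR_zero. lra. intros i Hi. destruct (Nat.eqb_spec i k); [lia|auto].
 - rewrite IHk by lia. destruct (Nat.eqb_spec k j); [lia|lra]. Qed.

Lemma sumR_point' k j f : (j < k)%nat -> (forall i, (i < k)%nat -> i <> j -> f i = 0) -> sumR k f = f j.
Proof. intros Hj H. rewrite <- (sumR_point k j (f j)) by auto. apply sumR_ext. intros i Hi. destruct (Nat.eqb_spec i j). subst; auto. auto. Qed.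

Lemma sumR_nonneg_zero k f j : (forall i, (i < k)%nat -> 0 <= f i) -> sumR k f = 0 -> (j < k)%nat -> f j = 0.
Proof. intros H Hs Hj. pose proof (sumR_term k f j H Hj). specialize (H j Hj). lra. Qed.

Lemma sumR_const_le k f e : (forall i, (i < k)%nat -> f i <= e) -> sumR k f <= INR k * e.
Proof. induction k; intros H. simpl. lra.
 rewrite S_INR. cbn [sumR]. specialize (IHk (fun i Hi => H i ltac:(lia))). specialize (H k ltac:(lia)). lra. Qed.

Lemma sumR_abs_bound k f e : (forall i, (i < k)%nat -> Rabs (f i) <= e) -> Rabs (sumR k f) <= INR k * e.
Proof. intros H. eapply Rle_trans; [apply sumR_abs|]. apply sumR_const_le. auto. Qed.

Lemma Rabs_lt_iff x a : Rabs x < a <-> -a < x < a.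
Proof. unfold Rabs; destruct (Rcase_abs x); split; intros; lra. Qed.
Lemma Rabs_le_iff x a : Rabs x <= a <-> -a <= x <= a.
Proof. unfold Rabs; destruct (Rcase_abs x); split; intros; lra. Qed.

Fixpoint iter_sel (g : nat -> nat -> nat) (j : nat) : nat :=
  match j with O => g O O | S j' => g (S (iter_sel g j')) (S j') end.

Lemma iter_sel_prop (g : nat -> nat -> nat) (P : nat -> nat -> Prop) :
  (forall N k, (N <= g N k)%nat /\ P (g N k) k) ->
  (forall j, (iter_sel g j < iter_sel g (S j))%nat) /\ (forall j, P (iter_sel g j) j).
Proof. intros H. split.
 - intros j. simpl. destruct (H (S (iter_sel g j)) (S j)). lia.
 - intros j. destruct j; simpl; apply H. Qed.

Lemma incr_ge (phi : nat -> nat) : (forall j, (phi j < phi (S j))%nat) -> forall j, (j <= phi j)%nat.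
Proof. intros H j. induction j. lia. specialize (H j). lia. Qed.

Lemma incr_mono (phi : nat -> nat) : (forall j, (phi j < phi (S j))%nat) -> forall i j, (i <= j)%nat -> (phi i <= phi j)%nat.
Proof. intros H i j Hij. induction Hij. lia. specialize (H m). lia. Qed.

Lemma inv_small eps : 0 < eps -> exists J, forall j, (J <= j)%nat -> / (INR j + 1) < eps.
Proof. intros He. destruct (INR_unbounded (/ eps)) as [J HJ]. exists J. intros j Hj.
 apply le_INR in Hj. pose proof (pos_INR J).
 assert (0 < / eps) by (apply Rinv_0_lt_compat; lra).
 rewrite <- (Rinv_inv eps). apply Rinv_lt_contravar. apply Rmult_lt_0_compat; lra. lra. Qed.

Lemma inv_pos j : 0 < / (INR j + 1).
Proof. apply Rinv_0_lt_compat. pose proof (pos_INR j). lra. Qed.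

Lemma BW1 (v : nat -> R) (B : R) : (forall j, Rabs (v j) <= B) ->
  exists (psi : nat -> nat) (l : R), (forall j, (psi j < psi (S j))%nat) /\
    forall eps, 0 < eps -> exists J, forall j, (J <= j)%nat -> Rabs (v (psi j) - l) < eps.
Proof.
 intros HB.
 destruct (Bolzano_Weierstrass v (fun c => -B <= c <= B) (compact_P3 _ _)) as [l Hl].
 { intros j. specialize (HB j). apply Rabs_le_iff in HB. lra. }
 assert (pick : forall N k, exists p, (N <= p)%nat /\ Rabs (v p - l) < / (INR k + 1)).
 { intros N k. destruct (Hl (disc l (mkposreal _ (inv_pos k))) N) as [p [Hp1 Hp2]].
   - exists (mkposreal _ (inv_pos k)). intros x Hx. exact Hx.
   - exists p. split; auto. }
 set (g := fun N k => proj1_sig (constructive_indefinite_description _ (pick N k))).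
 destruct (iter_sel_prop g (fun p k => Rabs (v p - l) < / (INR k + 1))) as [H1 H2].
 { intros N k. unfold g. destruct (constructive_indefinite_description _ (pick N k)) as [p Hp]. simpl. exact Hp. }
 exists (iter_sel g), l. split; auto.
 intros eps He. destruct (inv_small eps He) as [J HJ]. exists J. intros j Hj.
 specialize (H2 j). specialize (HJ j Hj). simpl in H2. lra.
Qed.

Lemma BW_list {T : Type} (L : list T) (u : nat -> T -> R) (B : R) :
  (forall t x, In x L -> Rabs (u t x) <= B) ->
  exists (phi : nat -> nat) (p : T -> R), (forall j, (phi j < phi (S j))%nat) /\
    forall eps, 0 < eps -> exists J, forall j, (J <= j)%nat -> forall x, In x L -> Rabs (u (phi j) x - p x) < eps.
Proof.
 induction L as [|a L IH]; intros HB.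
 - exists (fun j => j), (fun _ => 0). split. intros; lia. intros eps He. exists O. intros j _ x [].
 - destruct IH as [phi [p [Hphi Hconv]]]. { intros t x Hx. apply HB. right; auto. }
   destruct (BW1 (fun j => u (phi j) a) B) as [psi [l [Hpsi Hl]]]. { intros; apply HB; left; auto. }
   exists (fun j => phi (psi j)), (fun x => if excluded_middle_informative (x = a) then l else p x).
   split. { intros j. pose proof (Hpsi j). pose proof (incr_mono phi Hphi (S (psi j)) (psi (S j)) ltac:(lia)). specialize (Hphi (psi j)). lia. }
   intros eps He. destruct (Hconv eps He) as [J1 HJ1]. destruct (Hl eps He) as [J2 HJ2].
   exists (Nat.max J1 J2). intros j Hj x Hx.
   destruct (excluded_middle_informative (x = a)) as [->|Hne].
   + apply HJ2. lia.
   + destruct Hx as [Hx|Hx]. { congruence. }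
     apply HJ1; auto. pose proof (incr_ge psi Hpsi j). lia.
Qed.

Definition aclosed (m : nat) (K : (nat -> R) -> Prop) : Prop :=
  forall c, (forall eps, 0 < eps -> exists w, K w /\ forall j, (j < m)%nat -> Rabs (c j - w j) < eps) -> K c.

Lemma approx_nonneg a E : 0 <= E -> (forall eps, 0 < eps -> - eps * E <= a) -> 0 <= a.
Proof. intros HE H. destruct (Rle_lt_dec 0 a) as [|Ha]; auto.
 assert (Hp : 0 < - a / (2 * (E + 1))). { apply Rdiv_lt_0_compat; lra. }
 specialize (H _ Hp). exfalso.
 assert (- a / (2 * (E + 1)) * E <= - a / (2 * (E + 1)) * (E + 1)) by (apply Rmult_le_compat_l; lra).
 assert (- a / (2 * (E + 1)) * (E + 1) = - a / 2) by (field; lra). lra. Qed.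

Lemma approx_zero a : (forall eps, 0 < eps -> Rabs a < eps) -> a = 0.
Proof. intros H. destruct (Req_dec a 0); auto. exfalso. specialize (H (Rabs a) ltac:(apply Rabs_pos_lt; auto)). lra. Qed.

Lemma inv_le_nat a b : (a <= b)%nat -> / (INR b + 1) <= / (INR a + 1).
Proof. intros H. apply le_INR in H. pose proof (pos_INR a). apply Rinv_le_contravar; lra. Qed.

Lemma inv_le1 a : / (INR a + 1) <= 1.
Proof. pose proof (inv_le_nat 0 a ltac:(lia)). simpl in H. rewrite Rplus_0_l, Rinv_1 in H. exact H. Qed.

Section S.
Variables (n m : nat) (A : nat -> nat -> R).

Lemma Sig_ext c d x : (forall j, (j < m)%nat -> c j = d j) -> Sig n m A c x = Sig n m A d x.
Proof. intros H. unfold Sig. apply sumR_ext. intros; rewrite H; auto. Qed.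

Lemma Sig_plus c d x : Sig n m A (fun j => c j + d j) x = Sig n m A c x + Sig n m A d x.
Proof. unfold Sig. rewrite <- sumR_plus. apply sumR_ext; intros; ring. Qed.

Lemma Sig_scal a c x : Sig n m A (fun j => a * c j) x = a * Sig n m A c x.
Proof. unfold Sig. rewrite <- sumR_scal. apply sumR_ext; intros; ring. Qed.

Lemma colDot_zero j : colDot n A j (fun _ => 0) = 0.
Proof. unfold colDot. apply sumR_zero. intros; ring. Qed.

Lemma Sig_at0 c : Sig n m A c (fun _ => 0) = sumR m c.
Proof. unfold Sig. apply sumR_ext. intros. rewrite colDot_zero, exp_0. ring. Qed.

Lemma NNS_scal a c : 0 <= a -> C_NNS n m A c -> C_NNS n m A (fun j => a * c j).
Proof. intros Ha H x. rewrite Sig_scal. apply Rmult_le_pos; auto. Qed.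

Lemma AGE_scal k a c : 0 <= a -> C_AGE n m A k c -> C_AGE n m A k (fun j => a * c j).
Proof. intros Ha [H1 H2]. split. apply NNS_scal; auto. intros i Hi Hik. apply Rmult_le_pos; auto. Qed.

Lemma AGE_closed k : aclosed m (C_AGE n m A k).
Proof. intros c H. split.
 - intros x. apply (approx_nonneg _ (sumR m (fun j => exp (colDot n A j x)))).
   { apply sumR_nonneg. intros; left; apply exp_pos. }
   intros eps He. destruct (H eps He) as [w [[Hw1 Hw2] Hcw]].
   specialize (Hw1 x).
   assert (Sig n m A c x = Sig n m A w x + Sig n m A (fun j => c j - w j) x).
   { rewrite <- Sig_plus. apply Sig_ext. intros; ring. }
   assert (- eps * sumR m (fun j => exp (colDot n A j x)) <= Sig n m A (fun j => c j - w j) x).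
   { rewrite <- sumR_scal. unfold Sig. apply sumR_le. intros i Hi. specialize (Hcw i Hi).
     apply Rabs_lt_iff in Hcw. pose proof (exp_pos (colDot n A i x)).
     apply Rmult_le_compat_r; lra. }
   lra.
 - intros i Hi Hik. apply (approx_nonneg _ 1). lra. intros eps He.
   destruct (H eps He) as [w [[Hw1 Hw2] Hcw]]. specialize (Hw2 i Hi Hik). specialize (Hcw i Hi).
   apply Rabs_lt_iff in Hcw. lra.
Qed.

End S.

Section S.
Variables (n m : nat) (A : nat -> nat -> R).
Hypothesis Hdistinct : forall j k, (j < m)%nat -> (k < m)%nat -> j <> k ->
                 exists i, (i < n)%nat /\ A i j <> A i k.

Lemma colDot_diff i k t :
  colDot n A i (fun r => t * (A r i - A r k)) =
  colDot n A k (fun r => t * (A r i - A r k)) + t * sumR n (fun r => (A r i - A r k)^2).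
Proof. unfold colDot. rewrite <- sumR_scal, <- sumR_plus. apply sumR_ext. intros; ring. Qed.

Lemma AGE_zero k c : (k < m)%nat -> C_AGE n m A k c -> (forall y, Sig n m A c y = 0) ->
  forall i, (i < m)%nat -> c i = 0.
Proof.
 intros Hk [HN Hpos] H0.
 assert (Hoff : forall i, (i < m)%nat -> i <> k -> c i = 0).
 { intros i Hi Hik. destruct (Req_dec (c i) 0) as [|Hne]; auto. exfalso.
   assert (Hci : 0 < c i) by (specialize (Hpos i Hi Hik); lra).
   destruct (Hdistinct i k Hi Hk Hik) as [r [Hr HA]].
   set (s := sumR n (fun r => (A r i - A r k)^2)).
   assert (Hs : 0 < s).
   { assert ((A r i - A r k)^2 <= s) by (apply (sumR_term n (fun r => (A r i - A r k)^2)); auto; intros; apply pow2_ge_0).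
     assert (0 < (A r i - A r k)^2). { assert (Hd : A r i - A r k <> 0) by lra. destruct (Rlt_dec 0 (A r i - A r k)); [nra|]. assert (A r i - A r k < 0) by lra. nra. } lra. }
   set (t := (Rabs (c k) + 1) / (c i * s)).
   set (y := fun r => t * (A r i - A r k)).
   set (Ek := exp (colDot n A k y)).
   assert (HEi : exp (colDot n A i y) = Ek * exp (t * s)).
   { unfold Ek, y. rewrite colDot_diff. rewrite exp_plus. reflexivity. }
   specialize (H0 y).
   assert (Hlow : sumR m (fun j => (if Nat.eqb j k then c k * Ek else 0) + (if Nat.eqb j i then c i * exp (colDot n A i y) else 0)) <= Sig n m A c y).
   { unfold Sig. apply sumR_le. intros j Hj. destruct (Nat.eqb_spec j k); destruct (Nat.eqb_spec j i); subst; try lia.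
     - unfold Ek; lra.
     - lra.
     - pose proof (Hpos j Hj n0). pose proof (exp_pos (colDot n A j y)). nra. }
   rewrite sumR_plus, sumR_point, sumR_point in Hlow by auto.
   rewrite HEi in Hlow.
   assert (HEk : 0 < Ek) by apply exp_pos.
   assert (c k + c i * exp (t * s) <= 0).
   { assert (Ek * (c k + c i * exp (t * s)) <= 0) by nra. nra. }
   pose proof (exp_ineq1_le (t * s)).
   assert (c i * (t * s) = Rabs (c k) + 1) by (unfold t; field; lra).
   assert (c i * (1 + t * s) <= c i * exp (t * s)) by (apply Rmult_le_compat_l; lra).
   pose proof (Rle_abs (- c k)). rewrite Rabs_Ropp in *. nra. }
 intros i Hi. destruct (Nat.eq_dec i k) as [->|]; [|auto].
 specialize (H0 (fun _ => 0)). rewrite Sig_at0 in H0. rewrite (sumR_point' m k c) in H0; auto.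
Qed.
End S.

Section S.
Variables (n m : nat) (A : nat -> nat -> R).
Hypothesis Hdistinct : forall j k, (j < m)%nat -> (k < m)%nat -> j <> k ->
                 exists i, (i < n)%nat /\ A i j <> A i k.

Lemma pointed (X : nat -> nat -> R) : (forall k, (k < m)%nat -> C_AGE n m A k (X k)) ->
  (forall i, (i < m)%nat -> sumR m (fun k => X k i) = 0) ->
  forall k i, (k < m)%nat -> (i < m)%nat -> X k i = 0.
Proof.
 intros HX Hs k i Hk Hi.
 apply (AGE_zero n m A Hdistinct k (X k) Hk (HX k Hk)); auto.
 intros y.
 assert (Htot : sumR m (fun k => Sig n m A (X k) y) = 0).
 { unfold Sig. rewrite sumR_swap. apply sumR_zero. intros j Hj.
   rewrite (sumR_ext _ _ (fun k => exp (colDot n A j y) * X k j)) by (intros; ring).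
   rewrite sumR_scal, Hs by auto. ring. }
 apply (sumR_nonneg_zero m (fun k => Sig n m A (X k) y)); auto.
 intros k' Hk'. apply (HX k' Hk').
Qed.

Lemma in_L k i : In (k, i) (list_prod (seq 0 m) (seq 0 m)) <-> (k < m)%nat /\ (i < m)%nat.
Proof. rewrite in_prod_iff, !in_seq. lia. Qed.

Lemma SAGE_closed : aclosed m (C_SAGE n m A).
Proof.
 intros c Happ.
 assert (H1 : forall t : nat, exists X : nat -> nat -> R, (forall k, (k < m)%nat -> C_AGE n m A k (X k)) /\
    forall i, (i < m)%nat -> Rabs (c i - sumR m (fun k => X k i)) < / (INR t + 1)).
 { intros t. destruct (Happ _ (inv_pos t)) as [w [[cs [Hcs1 Hcs2]] Hw]]. exists cs. split; auto.
   intros i Hi. rewrite <- Hcs2; auto. }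
 set (X := fun t => proj1_sig (constructive_indefinite_description _ (H1 t))).
 assert (HX : forall t, (forall k, (k < m)%nat -> C_AGE n m A k (X t k)) /\
    forall i, (i < m)%nat -> Rabs (c i - sumR m (fun k => X t k i)) < / (INR t + 1)).
 { intros t. unfold X. destruct (constructive_indefinite_description _ (H1 t)) as [x Hx]. exact Hx. }
 clearbody X. clear H1.
 set (nrm := fun t => sumR m (fun k => sumR m (fun i => Rabs (X t k i)))).
 assert (Hnrm : forall t k i, (k < m)%nat -> (i < m)%nat -> Rabs (X t k i) <= nrm t).
 { intros t k i Hk Hi. unfold nrm.
   eapply Rle_trans; [| apply (sumR_term m (fun k => sumR m (fun i => Rabs (X t k i))) k); auto].
   - apply (sumR_term m (fun i => Rabs (X t k i))); auto. intros; apply Rabs_pos.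
   - intros; apply sumR_nonneg; intros; apply Rabs_pos. }
 set (L := list_prod (seq 0 m) (seq 0 m)).
 destruct (classic (exists B, forall T, exists t, (T <= t)%nat /\ nrm t <= B)) as [[B HB]|HnB].
 -
   assert (Hpick : forall (N k : nat), exists t, (N <= t)%nat /\ nrm t <= B) by (intros N _; apply HB).
   set (g := fun N k => proj1_sig (constructive_indefinite_description _ (Hpick N k))).
   destruct (iter_sel_prop g (fun p _ => nrm p <= B)) as [Hr1 Hr2].
   { intros N k. unfold g. destruct (constructive_indefinite_description _ (Hpick N k)) as [t Ht]. exact Ht. }
   set (rho := iter_sel g) in *. clearbody rho.
   destruct (BW_list L (fun j ki => X (rho j) (fst ki) (snd ki)) B) as [phi [P [Hphi HP]]].
   { intros t [k i] Hx. apply in_L in Hx. simpl. eapply Rle_trans; [apply Hnrm; tauto| apply Hr2]. }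
   assert (Htau : forall j, (j <= rho (phi j))%nat).
   { intros j. pose proof (incr_ge rho Hr1 (phi j)). pose proof (incr_ge phi Hphi j). lia. }
   exists (fun k i => P (k, i)). split.
   + intros k Hk. apply AGE_closed. intros eps He. destruct (HP eps He) as [J HJ].
     exists (X (rho (phi J)) k). split. apply HX; auto. intros i Hi.
     specialize (HJ J (le_n J) (k, i) (proj2 (in_L k i) (conj Hk Hi))). simpl in HJ.
     rewrite Rabs_minus_sym. exact HJ.
   + intros i Hi. apply Rminus_diag_uniq. apply approx_zero. intros eps He.
     assert (Hm1 : 0 < INR m + 1) by (pose proof (pos_INR m); lra).
     assert (He1 : 0 < eps / (2 * (INR m + 1))) by (apply Rdiv_lt_0_compat; lra).
     destruct (HP _ He1) as [J1 HJ1]. destruct (inv_small (eps / 2)) as [J2 HJ2]; [lra|].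
     set (j := Nat.max J1 J2).
     assert (h1 : Rabs (c i - sumR m (fun k => X (rho (phi j)) k i)) < eps / 2).
     { eapply Rlt_le_trans. apply HX; auto. eapply Rle_trans. apply inv_le_nat. apply (Htau j).
       left. apply HJ2. unfold j; lia. }
     assert (h2 : Rabs (sumR m (fun k => X (rho (phi j)) k i - P (k, i))) <= INR m * (eps / (2 * (INR m + 1)))).
     { apply sumR_abs_bound. intros k Hk. left.
       apply (HJ1 j ltac:(unfold j; lia) (k, i) (proj2 (in_L k i) (conj Hk Hi))). }
     rewrite sumR_minus in h2.
     assert (INR m * (eps / (2 * (INR m + 1))) < eps / 2).
     { apply (Rmult_lt_reg_r (2 * (INR m + 1))). lra. field_simplify; try lra; try (pose proof (pos_INR m); nra). }
     apply Rabs_lt_iff in h1. apply Rabs_le_iff in h2. apply Rabs_lt_iff. lra.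
 - assert (Hunb : forall B, exists T, forall t, (T <= t)%nat -> B < nrm t).
   { intros B. apply NNPP. intro H. apply HnB. exists B. intros T. apply NNPP. intro H'. apply H.
     exists T. intros t Ht. apply Rnot_le_lt. intro. apply H'. exists t. auto. }
   destruct (Hunb 1) as [T1 HT1].
   assert (Hnpos : forall j, 1 < nrm (j + T1)%nat) by (intros j; apply HT1; lia).
   set (Y := fun j k i => / nrm (j + T1)%nat * X (j + T1)%nat k i).
   assert (HYabs : forall j k i, Rabs (Y j k i) = / nrm (j + T1)%nat * Rabs (X (j + T1)%nat k i)).
   { intros. unfold Y. rewrite Rabs_mult, Rabs_inv, (Rabs_pos_eq (nrm _)); auto. specialize (Hnpos j); lra. }
   destruct (BW_list L (fun j ki => Y j (fst ki) (snd ki)) 1) as [phi [P [Hphi HP]]].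
   { intros t [k i] Hx. apply in_L in Hx. simpl. rewrite HYabs. specialize (Hnpos t).
     apply (Rmult_le_reg_l (nrm (t + T1)%nat)). lra. rewrite <- Rmult_assoc, Rinv_r by lra.
     rewrite Rmult_1_l, Rmult_1_r. apply Hnrm; tauto. }
   assert (HPage : forall k, (k < m)%nat -> C_AGE n m A k (fun i => P (k, i))).
   { intros k Hk. apply AGE_closed. intros eps He. destruct (HP eps He) as [J HJ].
     exists (Y (phi J) k). split.
     - unfold Y. apply AGE_scal. left. apply Rinv_0_lt_compat. specialize (Hnpos (phi J)). lra. apply HX; auto.
     - intros i Hi. specialize (HJ J (le_n J) (k, i) (proj2 (in_L k i) (conj Hk Hi))). simpl in HJ.
       rewrite Rabs_minus_sym. exact HJ. }
   assert (HPsum : forall i, (i < m)%nat -> sumR m (fun k => P (k, i)) = 0).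
   { intros i Hi. apply approx_zero. intros eps He.
     set (Cc := sumR m (fun i => Rabs (c i)) + 1).
     assert (HCc : Rabs (c i) + 1 <= Cc).
     { unfold Cc. pose proof (sumR_term m (fun i => Rabs (c i)) i (fun _ _ => Rabs_pos _) Hi). simpl in H. lra. }
     assert (Hm1 : 0 < INR m + 1) by (pose proof (pos_INR m); lra).
     assert (He1 : 0 < eps / (2 * (INR m + 1))) by (apply Rdiv_lt_0_compat; lra).
     destruct (HP _ He1) as [J1 HJ1]. destruct (Hunb (2 * Cc / eps)) as [TB HTB].
     set (j := Nat.max J1 TB). set (tau := (phi j + T1)%nat).
     assert (Hnt : 2 * Cc / eps < nrm tau) by (apply HTB; unfold tau; pose proof (incr_ge phi Hphi j); unfold j in *; lia).
     assert (HsX : Rabs (sumR m (fun k => X tau k i)) <= Cc).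
     { pose proof (proj2 (HX tau) i Hi). pose proof (inv_le1 tau).
       apply Rabs_lt_iff in H. apply Rabs_le_iff. pose proof (Rle_abs (c i)). pose proof (Rle_abs (- c i)).
       rewrite Rabs_Ropp in H2. lra. }
     assert (HsY : Rabs (sumR m (fun k => Y (phi j) k i)) < eps / 2).
     { unfold Y. fold tau. rewrite sumR_scal, Rabs_mult, Rabs_inv, (Rabs_pos_eq (nrm tau)) by (pose proof (Hnpos (phi j)); fold tau in H; lra).
       assert (Hnt2 : 2 * Cc < eps * nrm tau).
       { apply (Rmult_lt_compat_l eps) in Hnt; auto. replace (eps * (2 * Cc / eps)) with (2 * Cc) in Hnt by (field; lra). lra. }
       pose proof (Hnpos (phi j)). fold tau in H.
       apply (Rmult_lt_reg_r (nrm tau)). lra.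
       eapply Rle_lt_trans with (Cc). 
       { rewrite Rmult_comm, <- Rmult_assoc, Rinv_r, Rmult_1_l by lra. auto. }
       lra. }
     assert (h2 : Rabs (sumR m (fun k => P (k, i) - Y (phi j) k i)) <= INR m * (eps / (2 * (INR m + 1)))).
     { apply sumR_abs_bound. intros k Hk. left. rewrite Rabs_minus_sym.
       apply (HJ1 j ltac:(unfold j; lia) (k, i) (proj2 (in_L k i) (conj Hk Hi))). }
     rewrite sumR_minus in h2.
     assert (INR m * (eps / (2 * (INR m + 1))) < eps / 2).
     { apply (Rmult_lt_reg_r (2 * (INR m + 1))). lra. field_simplify; try lra; try (pose proof (pos_INR m); nra). }
     apply Rabs_lt_iff in HsY. apply Rabs_le_iff in h2. apply Rabs_lt_iff. lra. }
   pose proof (pointed (fun k i => P (k, i)) HPage HPsum) as HP0. simpl in HP0.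
   exfalso.
   assert (Hm1 : 0 < INR m * INR m + 1) by (pose proof (pos_INR m); nra).
   assert (He : 0 < / (INR m * INR m + 1)) by (apply Rinv_0_lt_compat; lra).
   destruct (HP _ He) as [J HJ].
   assert (Hone : sumR m (fun k => sumR m (fun i => Rabs (Y (phi J) k i))) = 1).
   { rewrite (sumR_ext m _ (fun k => / nrm (phi J + T1)%nat * sumR m (fun i => Rabs (X (phi J + T1)%nat k i)))).
     - rewrite sumR_scal. fold (nrm (phi J + T1)%nat). apply Rinv_l. specialize (Hnpos (phi J)). lra.
     - intros k Hk. rewrite <- sumR_scal. apply sumR_ext. intros; apply HYabs. }
   assert (sumR m (fun k => sumR m (fun i => Rabs (Y (phi J) k i))) <= INR m * (INR m * / (INR m * INR m + 1))).
   { apply sumR_const_le. intros k Hk. apply sumR_const_le. intros i Hi. left.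
     specialize (HJ J (le_n J) (k, i) (proj2 (in_L k i) (conj Hk Hi))). simpl in HJ.
     rewrite HP0 in HJ by auto. rewrite Rminus_0_r in HJ. exact HJ. }
   assert (INR m * (INR m * / (INR m * INR m + 1)) < 1).
   { rewrite <- Rmult_assoc. apply (Rmult_lt_reg_r (INR m * INR m + 1)). lra.
     rewrite Rmult_assoc, Rinv_l by lra. lra. }
   lra.
Qed.

End S.

Definition dot (m : nat) (u v : nat -> R) : R := sumR m (fun i => u i * v i).
Definition convexP (K : (nat -> R) -> Prop) : Prop :=
  forall u w t, K u -> K w -> 0 <= t <= 1 -> K (fun i => (1 - t) * u i + t * w i).

Lemma sq_lt_abs x e : 0 < e -> x ^ 2 < e ^ 2 -> Rabs x < e.
Proof. intros He H. destruct (Rlt_le_dec (Rabs x) e); auto. exfalso. rewrite <- pow2_abs in H.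
 pose proof (Rabs_pos x). nra. Qed.

Lemma le_approx x d : (forall eta, 0 < eta -> x <= d + eta) -> x <= d.
Proof. intros H. destruct (Rle_lt_dec x d); auto. specialize (H ((x - d) / 2) ltac:(lra)). lra. Qed.

Lemma sq_nonneg x : 0 <= x * x.
Proof. nra. Qed.

Section Sep.
Variable m : nat.
Let nsq u := dot m u u.

Lemma nsq_nonneg u : 0 <= nsq u.
Proof. apply sumR_nonneg. intros. apply sq_nonneg. Qed.

Lemma nsq_cont a b eps : 0 <= eps <= 1 -> (forall i, (i < m)%nat -> Rabs (a i - b i) <= eps) ->
  nsq a <= nsq b + eps * sumR m (fun i => 2 * Rabs (a i) + 1).
Proof. intros He H. unfold nsq, dot. rewrite <- sumR_scal, <- sumR_plus. apply sumR_le. intros i Hi.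
 specialize (H i Hi).
 assert (Hab : Rabs (a i + b i) <= 2 * Rabs (a i) + 1).
 { replace (a i + b i) with (2 * a i - (a i - b i)) by ring. eapply Rle_trans. apply Rabs_triang.
   rewrite Rabs_Ropp, Rabs_mult, (Rabs_pos_eq 2) by lra. lra. }
 assert (a i * a i - b i * b i <= Rabs (a i - b i) * Rabs (a i + b i)).
 { rewrite <- Rabs_mult. replace (a i * a i - b i * b i) with ((a i - b i) * (a i + b i)) by ring. apply Rle_abs. }
 assert (Rabs (a i - b i) * Rabs (a i + b i) <= eps * (2 * Rabs (a i) + 1)).
 { apply Rmult_le_compat; auto using Rabs_pos. }
 lra. Qed.

Lemma separation (K : (nat -> R) -> Prop) (p : nat -> R) :
  aclosed m K -> convexP K -> (exists w, K w) -> ~ K p ->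
  exists y delta, 0 < delta /\ forall w, K w -> dot m y p + delta <= dot m y w.
Proof.
 intros Hcl Hcv [w0 Hw0] Hp.
 set (E := fun r => exists w, K w /\ - r = nsq (fun i => p i - w i)).
 destruct (completeness E) as [l0 [Hl1 Hl2]].
 { exists 0. intros r [w [_ Hr]]. pose proof (nsq_nonneg (fun i => p i - w i)). lra. }
 { exists (- nsq (fun i => p i - w0 i)). exists w0. split; auto. ring. }
 set (d := - l0).
 assert (Hd1 : forall w, K w -> d <= nsq (fun i => p i - w i)).
 { intros w Hw. assert (E (- nsq (fun i => p i - w i))) by (exists w; split; auto; ring).
   specialize (Hl1 _ H). unfold d; lra. }
 assert (Hd2 : forall eta, 0 < eta -> exists w, K w /\ nsq (fun i => p i - w i) < d + eta).
 { intros eta He. apply NNPP. intro H. assert (l0 <= - (d + eta)).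
   { apply Hl2. intros r [w [Hw Hr]]. apply Rnot_lt_le. intro. apply H. exists w. split; auto. lra. }
   unfold d in *. lra. }
 assert (HW : forall j : nat, exists w, K w /\ nsq (fun i => p i - w i) < d + / (INR j + 1))
   by (intros j; apply Hd2, inv_pos).
 set (W := fun j => proj1_sig (constructive_indefinite_description _ (HW j))).
 assert (HWp : forall j, K (W j) /\ nsq (fun i => p i - W j i) < d + / (INR j + 1)).
 { intros j. unfold W. destruct (constructive_indefinite_description _ (HW j)) as [x Hx]. exact Hx. }
 clearbody W. clear HW.
 assert (Hpar : forall j k, nsq (fun i => W j i - W k i) <= 2 * / (INR j + 1) + 2 * / (INR k + 1)).
 { intros j k. destruct (HWp j) as [Hj1 Hj2]. destruct (HWp k) as [Hk1 Hk2].
   pose proof (Hd1 _ (Hcv _ _ (/2) Hj1 Hk1 ltac:(lra))) as Hmid.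
   assert (nsq (fun i => W j i - W k i) = 2 * nsq (fun i => p i - W j i) + 2 * nsq (fun i => p i - W k i)
       - 4 * nsq (fun i => p i - ((1 - / 2) * W j i + / 2 * W k i))).
   { unfold nsq, dot. rewrite <- !sumR_scal, <- sumR_plus, <- sumR_minus. apply sumR_ext. intros; field. }
   lra. }
 assert (Hcoord : forall j k i, (i < m)%nat -> (W j i - W k i) ^ 2 <= 2 * / (INR j + 1) + 2 * / (INR k + 1)).
 { intros j k i Hi. eapply Rle_trans; [|apply Hpar]. unfold nsq, dot.
   replace ((W j i - W k i) ^ 2) with ((fun i => (W j i - W k i) * (W j i - W k i)) i) by (simpl; ring).
   apply (sumR_term m (fun i => (W j i - W k i) * (W j i - W k i))); auto. intros; apply sq_nonneg. }
 assert (Hsmall : forall e, 0 < e -> exists J, forall j k i, (J <= j)%nat -> (J <= k)%nat -> (i < m)%nat -> Rabs (W j i - W k i) < e).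
 { intros e He. destruct (inv_small (e ^ 2 / 4)) as [J HJ]. { apply Rdiv_lt_0_compat; [nra|lra]. }
   exists J. intros j k i Hj Hk Hi. apply sq_lt_abs; auto. pose proof (HJ j Hj). pose proof (HJ k Hk).
   pose proof (Hcoord j k i Hi). lra. }
 assert (Hqex : forall i, exists l, (i < m)%nat -> Un_cv (fun j => W j i) l).
 { intros i. destruct (Compare_dec.lt_dec i m) as [Hi|Hi]; [|exists 0; intros; lia].
   assert (Hc : Cauchy_crit (fun j => W j i)).
   { intros e He. destruct (Hsmall e He) as [J HJ]. exists J. intros j k Hj Hk. unfold R_dist. apply HJ; lia. }
   destruct (R_complete _ Hc) as [l Hl]. exists l. auto. }
 set (q := fun i => proj1_sig (constructive_indefinite_description _ (Hqex i))).
 assert (Hq : forall i, (i < m)%nat -> Un_cv (fun j => W j i) (q i)).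
 { intros i. unfold q. destruct (constructive_indefinite_description _ (Hqex i)) as [x Hx]. exact Hx. }
 clearbody q.
 assert (Hunif : forall e, 0 < e -> forall J0, exists j, (J0 <= j)%nat /\ forall i, (i < m)%nat -> Rabs (W j i - q i) < e).
 { intros e He J0. destruct (Hsmall (e / 2) ltac:(lra)) as [J HJ]. exists (Nat.max J0 J). split; [lia|].
   intros i Hi. destruct (Hq i Hi (e / 2) ltac:(lra)) as [N HN].
   specialize (HN (Nat.max N J) ltac:(lia)). unfold R_dist in HN.
   specialize (HJ (Nat.max J0 J) (Nat.max N J) i ltac:(lia) ltac:(lia) Hi).
   apply Rabs_lt_iff in HN. apply Rabs_lt_iff in HJ. apply Rabs_lt_iff. lra. }
 assert (HqK : K q).
 { apply Hcl. intros e He. destruct (Hunif e He 0%nat) as [j [_ Hj]]. exists (W j). split. apply HWp.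
   intros i Hi. rewrite Rabs_minus_sym. auto. }
 assert (Hpq : nsq (fun i => p i - q i) <= d).
 { set (M := sumR m (fun i => 2 * Rabs (p i - q i) + 1)).
   assert (HM : 0 <= M) by (apply sumR_nonneg; intros; pose proof (Rabs_pos (p i - q i)); lra).
   apply le_approx. intros eta Heta.
   set (e := Rmin 1 (eta / (2 * (M + 1)))).
   assert (He : 0 < e) by (unfold e; apply Rmin_glb_lt; [lra| apply Rdiv_lt_0_compat; lra]).
   destruct (inv_small (eta / 2)) as [J0 HJ0]; [lra|].
   destruct (Hunif e He J0) as [j [Hj1 Hj2]].
   pose proof (nsq_cont (fun i => p i - q i) (fun i => p i - W j i) e) as Hc.
   simpl in Hc. fold M in Hc.
   assert (nsq (fun i => p i - q i) <= nsq (fun i => p i - W j i) + e * M).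
   { apply Hc. split; [lra| apply Rmin_l]. intros i Hi. replace (p i - q i - (p i - W j i)) with (W j i - q i) by ring. left; auto. }
   assert (e * M <= eta / 2).
   { assert (e <= eta / (2 * (M + 1))) by apply Rmin_r.
     apply Rle_trans with (eta / (2 * (M + 1)) * M). apply Rmult_le_compat_r; auto.
     apply (Rmult_le_reg_r (2 * (M + 1))). lra. field_simplify; try lra; try nra. }
   pose proof (proj2 (HWp j)). pose proof (HJ0 j Hj1). lra. }
 pose proof (Hd1 q HqK) as Hpq2.
 assert (Hdpos : 0 < d).
 { destruct (Rlt_le_dec 0 d) as [|Hd0]; auto. exfalso. apply Hp. apply Hcl. intros e He. exists q. split; auto.
   intros j Hj. assert (Hz : nsq (fun i => p i - q i) = 0) by (pose proof (nsq_nonneg (fun i => p i - q i)); lra).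
   pose proof (sumR_nonneg_zero m (fun i => (p i - q i) * (p i - q i)) j ltac:(intros; apply sq_nonneg) Hz Hj) as H0.
   simpl in H0. assert (Hz0 : p j - q j = 0) by nra. rewrite Hz0, Rabs_R0. auto. }
 assert (Hvar : forall w, K w -> dot m (fun i => p i - q i) (fun i => w i - q i) <= 0).
 { intros w Hw. set (D := dot m (fun i => p i - q i) (fun i => w i - q i)). set (N := nsq (fun i => w i - q i)).
   assert (HN : 0 <= N) by apply nsq_nonneg.
   assert (Ht : forall t, 0 < t <= 1 -> 2 * D <= t * N).
   { intros t Ht. pose proof (Hd1 _ (Hcv _ _ t HqK Hw ltac:(lra))) as Hz.
     assert (nsq (fun i => p i - ((1 - t) * q i + t * w i)) = nsq (fun i => p i - q i) - 2 * t * D + t ^ 2 * N).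
     { unfold D, N, nsq, dot. rewrite <- !sumR_scal. rewrite <- sumR_minus, <- sumR_plus. apply sumR_ext. intros; ring. }
     assert (t * (2 * D) <= t * (t * N)) by nra. apply Rmult_le_reg_l in H0; lra. }
   destruct (Rle_lt_dec D 0) as [|HD]; auto. exfalso.
   set (t := Rmin 1 (D / (N + 1))).
   assert (0 < t) by (unfold t; apply Rmin_glb_lt; [lra|apply Rdiv_lt_0_compat; lra]).
   specialize (Ht t ltac:(split; [lra|apply Rmin_l])).
   assert (t <= D / (N + 1)) by apply Rmin_r.
   assert (t * N <= D / (N + 1) * N) by (apply Rmult_le_compat_r; auto).
   assert (D / (N + 1) * N < D). { apply (Rmult_lt_reg_r (N + 1)). lra. field_simplify; lra. }
   lra. }
 exists (fun i => q i - p i), d. split; auto. intros w Hw. specialize (Hvar w Hw).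
 assert (dot m (fun i => q i - p i) w - dot m (fun i => q i - p i) p =
         - dot m (fun i => p i - q i) (fun i => w i - q i) + nsq (fun i => p i - q i)).
 { apply Rminus_diag_uniq. unfold nsq, dot.
   assert (Ee : forall a b c e : R, a - b - (- c + e) = (a - b + c) - e) by (intros; ring). rewrite Ee.
   rewrite <- sumR_minus, <- sumR_plus, <- sumR_minus. apply sumR_zero. intros; ring. }
 lra.
Qed.
End Sep.

Lemma sumR_app a b f : sumR (a + b) f = sumR a f + sumR b (fun k => f (a + k)%nat).
Proof. induction b; simpl. rewrite Nat.add_0_r. ring. rewrite Nat.add_succ_r. simpl. rewrite IHb. ring. Qed.

Section M.
Variables (n m : nat) (A : nat -> nat -> R).
Hypothesis Hm : (0 < m)%nat.
Hypothesis Ha1 : forall i, (i < n)%nat -> A i 0%nat = 0.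

Lemma colDot0 x : colDot n A 0 x = 0.
Proof. unfold colDot. apply sumR_zero. intros i Hi. rewrite Ha1 by auto. ring. Qed.

Lemma Sig_e1 x : Sig n m A e1 x = 1.
Proof. unfold Sig. rewrite (sumR_point' m 0). rewrite colDot0, exp_0. unfold e1; simpl; ring. auto.
 intros i Hi Hne. unfold e1. destruct (Nat.eqb_spec i 0); [lia|ring]. Qed.

Lemma Sig_shift c g x : Sig n m A (fun i => c i - g * e1 i) x = Sig n m A c x - g.
Proof. rewrite (Sig_ext n m A _ (fun i => c i + (- g) * e1 i)) by (intros; ring).
 rewrite Sig_plus, Sig_scal, Sig_e1. ring. Qed.

Lemma sum_e1 v : sumR m (fun i => v i * e1 i) = v 0%nat.
Proof. rewrite (sumR_point' m 0). unfold e1; simpl; ring. auto.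
 intros i Hi Hne. unfold e1. destruct (Nat.eqb_spec i 0); [lia|ring]. Qed.

Lemma SAGE_NNS c : C_SAGE n m A c -> C_NNS n m A c.
Proof. intros [cs [H1 H2]] x.
 rewrite (Sig_ext n m A c (fun i => sumR m (fun k => cs k i))) by auto.
 assert (Sig n m A (fun i => sumR m (fun k => cs k i)) x = sumR m (fun k => Sig n m A (cs k) x)).
 { unfold Sig. rewrite sumR_swap. apply sumR_ext. intros i Hi.
   rewrite (Rmult_comm (sumR _ _)), <- sumR_scal. apply sumR_ext; intros; ring. }
 rewrite H. apply sumR_nonneg. intros k Hk. apply (H1 k Hk). Qed.

Lemma AGE_add k c d : C_AGE n m A k c -> C_AGE n m A k d -> C_AGE n m A k (fun i => c i + d i).
Proof. intros [H1 H2] [H3 H4]. split. intros x. rewrite Sig_plus. specialize (H1 x). specialize (H3 x). lra.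
 intros i Hi Hik. specialize (H2 i Hi Hik). specialize (H4 i Hi Hik). lra. Qed.

Lemma SAGE_add c d : C_SAGE n m A c -> C_SAGE n m A d -> C_SAGE n m A (fun i => c i + d i).
Proof. intros [cs [H1 H2]] [ds [H3 H4]]. exists (fun k i => cs k i + ds k i). split.
 intros k Hk. apply AGE_add; auto.
 intros i Hi. rewrite sumR_plus, <- H2, <- H4 by auto. reflexivity. Qed.

Lemma SAGE_scal a c : 0 <= a -> C_SAGE n m A c -> C_SAGE n m A (fun i => a * c i).
Proof. intros Ha [cs [H1 H2]]. exists (fun k i => a * cs k i). split.
 intros k Hk. apply AGE_scal; auto.
 intros i Hi. rewrite sumR_scal, <- H2 by auto. reflexivity. Qed.

Lemma AGE_SAGE k c : (k < m)%nat -> C_AGE n m A k c -> C_SAGE n m A c.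
Proof. intros Hk Hc. exists (fun k' i => if Nat.eqb k' k then c i else 0). split.
 - intros k' Hk'. destruct (Nat.eqb_spec k' k). subst; auto.
   split. intros x. unfold Sig. rewrite sumR_zero. lra. intros; ring. intros; lra.
 - intros i Hi. rewrite sumR_point; auto. Qed.

Lemma SAGE_zero : C_SAGE n m A (fun _ => 0).
Proof. apply (AGE_SAGE 0); auto. split. intros x. unfold Sig. rewrite sumR_zero. lra. intros; ring. intros; lra. Qed.

Lemma SAGE_e1 : C_SAGE n m A e1.
Proof. apply (AGE_SAGE 0); auto. split. intros x. rewrite Sig_e1. lra.
 intros i _ _. unfold e1. destruct (Nat.eqb i 0); lra. Qed.

Lemma SAGE_add_e1 c a : 0 <= a -> C_SAGE n m A c -> C_SAGE n m A (fun i => c i + a * e1 i).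
Proof. intros Ha Hc. apply SAGE_add; auto. apply SAGE_scal; auto. apply SAGE_e1. Qed.

Lemma SAGE_convex : convexP (C_SAGE n m A).
Proof. intros u w t Hu Hw Ht. apply SAGE_add; apply SAGE_scal; auto; lra. Qed.

Definition ev x := fun j => exp (colDot n A j x).

Lemma conv_ev x : conv_exp_range n m A (ev x).
Proof. exists 1%nat, (fun _ => 1), (fun _ => x). split; [intros; lra|]. split. simpl; ring.
 intros j Hj. unfold ev. simpl. ring. Qed.

Lemma cl_of_conv w : conv_exp_range n m A w -> cl_conv_exp_range n m A w.
Proof. intros H eps He. exists w. split; auto. intros. unfold Rminus; rewrite Rplus_opp_r, Rabs_R0; auto. Qed.

Lemma cl_closed : aclosed m (cl_conv_exp_range n m A).
Proof. intros v H eps He. destruct (H (eps / 2) ltac:(lra)) as [w [Hw1 Hw2]].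
 destruct (Hw1 (eps / 2) ltac:(lra)) as [u [Hu1 Hu2]]. exists u. split; auto.
 intros j Hj. specialize (Hw2 j Hj). specialize (Hu2 j Hj). apply Rabs_lt_iff in Hw2. apply Rabs_lt_iff in Hu2.
 apply Rabs_lt_iff. lra. Qed.

Lemma conv_convex : convexP (conv_exp_range n m A).
Proof. intros u w t [N1 [l1 [x1 [H1 [H2 H3]]]]] [N2 [l2 [x2 [H4 [H5 H6]]]]] Ht.
 exists (N1 + N2)%nat, (fun k => if Nat.ltb k N1 then (1 - t) * l1 k else t * l2 (k - N1)%nat),
   (fun k => if Nat.ltb k N1 then x1 k else x2 (k - N1)%nat).
 split; [|split].
 - intros k Hk. destruct (Nat.ltb_spec k N1). apply Rmult_le_pos; [lra|auto]. apply Rmult_le_pos; [lra|apply H4; lia].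
 - rewrite sumR_app. rewrite (sumR_ext N1 _ (fun k => (1 - t) * l1 k)).
   rewrite (sumR_ext N2 _ (fun k => t * l2 k)). rewrite !sumR_scal, H2, H5. ring.
   + intros k Hk. destruct (Nat.ltb_spec (N1 + k) N1); [lia|]. f_equal. f_equal. lia.
   + intros k Hk. destruct (Nat.ltb_spec k N1); [auto|lia].
 - intros j Hj. rewrite sumR_app.
   rewrite (sumR_ext N1 _ (fun k => (1 - t) * (l1 k * exp (colDot n A j (x1 k))))).
   rewrite (sumR_ext N2 _ (fun k => t * (l2 k * exp (colDot n A j (x2 k))))). rewrite H3, H6 by auto. rewrite !sumR_scal. ring.
   + intros k Hk. destruct (Nat.ltb_spec (N1 + k) N1); [lia|]. replace (N1 + k - N1)%nat with k by lia. ring.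
   + intros k Hk. destruct (Nat.ltb_spec k N1); [ring|lia].
Qed.

Lemma cl_convex : convexP (cl_conv_exp_range n m A).
Proof. intros u w t Hu Hw Ht eps He. destruct (Hu eps He) as [u' [Hu1 Hu2]]. destruct (Hw eps He) as [w' [Hw1 Hw2]].
 exists (fun i => (1 - t) * u' i + t * w' i). split. apply conv_convex; auto.
 intros j Hj. specialize (Hu2 j Hj). specialize (Hw2 j Hj).
 set (e' := Rmax (Rabs (u j - u' j)) (Rabs (w j - w' j))).
 assert (e' < eps) by (unfold e'; apply Rmax_lub_lt; auto).
 assert (Ha : Rabs (u j - u' j) <= e') by apply Rmax_l. assert (Hb : Rabs (w j - w' j) <= e') by apply Rmax_r.
 apply Rabs_le_iff in Ha. apply Rabs_le_iff in Hb.
 assert ((1 - t) * (u j - u' j) <= (1 - t) * e') by (apply Rmult_le_compat_l; lra).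
 assert ((1 - t) * (- e') <= (1 - t) * (u j - u' j)) by (apply Rmult_le_compat_l; lra).
 assert (t * (w j - w' j) <= t * e') by (apply Rmult_le_compat_l; lra).
 assert (t * (- e') <= t * (w j - w' j)) by (apply Rmult_le_compat_l; lra).
 apply Rabs_lt_iff. lra. Qed.

Lemma conv_dual w c : conv_exp_range n m A w -> C_NNS n m A c -> 0 <= sumR m (fun i => w i * c i).
Proof. intros [N [l [xs [H1 [H2 H3]]]]] Hc.
 rewrite (sumR_ext m _ (fun i => sumR N (fun k => l k * (c i * exp (colDot n A i (xs k)))))).
 - rewrite sumR_swap. apply sumR_nonneg. intros k Hk. rewrite sumR_scal. apply Rmult_le_pos; auto. apply Hc.
 - intros i Hi. rewrite H3 by auto. rewrite Rmult_comm, <- sumR_scal. apply sumR_ext; intros; ring.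
Qed.

Lemma cl_dual v c : cl_conv_exp_range n m A v -> C_NNS n m A c -> 0 <= sumR m (fun i => v i * c i).
Proof. intros Hv Hc. apply (approx_nonneg _ (sumR m (fun i => Rabs (c i)))).
 apply sumR_nonneg; intros; apply Rabs_pos.
 intros eps He. destruct (Hv eps He) as [w [Hw1 Hw2]]. pose proof (conv_dual w c Hw1 Hc).
 assert (sumR m (fun i => v i * c i) = sumR m (fun i => w i * c i) + sumR m (fun i => (v i - w i) * c i)).
 { rewrite <- sumR_plus. apply sumR_ext; intros; ring. }
 assert (- eps * sumR m (fun i => Rabs (c i)) <= sumR m (fun i => (v i - w i) * c i)).
 { rewrite <- sumR_scal. apply sumR_le. intros i Hi. specialize (Hw2 i Hi).
   pose proof (Rabs_pos (c i)). pose proof (Rle_abs (- ((v i - w i) * c i))).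
   rewrite Rabs_Ropp, Rabs_mult in H2. assert (Rabs (v i - w i) * Rabs (c i) <= eps * Rabs (c i)) by (apply Rmult_le_compat_r; lra).
   lra. }
 lra. Qed.

End M.

Section T.
Variables (n m : nat) (A : nat -> nat -> R).
Hypothesis Hm : (0 < m)%nat.
Hypothesis Hdistinct : forall j k, (j < m)%nat -> (k < m)%nat -> j <> k ->
                 exists i, (i < n)%nat /\ A i j <> A i k.
Hypothesis Ha1 : forall i, (i < n)%nat -> A i 0%nat = 0.

Lemma part1to2 : (forall c : nat -> R, exists v : ExtR, f_star_is n m A c v /\ f_SAGE_is n m A c v) ->
  forall c, C_NNS n m A c <-> C_SAGE n m A c.
Proof.
 intros H1 c. split; [|apply SAGE_NNS]. intros Hc.
 destruct (H1 c) as [v [Hs Hg]]. destruct v as [l| |]; simpl in Hs, Hg.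
 - destruct Hs as [Hs1 Hs2].
   assert (Hl : 0 <= l). { apply Hs2. intros y [x ->]. apply Hc. }
   destruct Hg as [Hg1 Hg2].
   apply (SAGE_closed n m A Hdistinct). intros eps He.
   assert (Hex : exists g, C_SAGE n m A (fun i => c i - g * e1 i) /\ l - eps < g).
   { apply NNPP. intro H. assert (l <= l - eps); [|lra]. apply Hg2. intros g Hg.
     apply Rnot_lt_le. intro. apply H. exists g; auto. }
   destruct Hex as [g [Hg Hgl]].
   exists (fun i => (c i - g * e1 i) + Rmax 0 g * e1 i). split.
   + apply (SAGE_add_e1 n m A Hm Ha1); auto. apply Rmax_l.
   + intros j Hj. unfold e1. destruct (Nat.eqb j 0); unfold Rmax; destruct (Rle_dec 0 g);
     replace (c j - (c j - g * 1 + g * 1)) with 0 by ring || idtac; apply Rabs_lt_iff; lra.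
 - destruct (Hs (Sig n m A c (fun _ => 0))). exists (fun _ => 0). reflexivity.
 - destruct (Hs 0) as [y [[x ->] Hy]]. specialize (Hc x). lra.
Qed.

Lemma key_shift : (forall c, C_NNS n m A c <-> C_SAGE n m A c) ->
  forall c g, C_SAGE n m A (fun i => c i - g * e1 i) <-> forall x, g <= Sig n m A c x.
Proof. intros H2 c g. rewrite <- H2. unfold C_NNS. split; intros H x; specialize (H x);
 rewrite (Sig_shift n m A Hm Ha1) in *; lra. Qed.

Lemma part2to1 : (forall c, C_NNS n m A c <-> C_SAGE n m A c) ->
  forall c : nat -> R, exists v : ExtR, f_star_is n m A c v /\ f_SAGE_is n m A c v.
Proof.
 intros H2 c. pose proof (key_shift H2 c) as Hk.
 destruct (classic (exists b, forall x, b <= Sig n m A c x)) as [[b Hb]|Hnb].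
 - destruct (completeness (fun r => exists x, - r = Sig n m A c x)) as [l0 [Hl1 Hl2]].
   { exists (- b). intros r [x Hx]. specialize (Hb x). lra. }
   { exists (- Sig n m A c (fun _ => 0)). exists (fun _ => 0). ring. }
   assert (Hlow : forall x, - l0 <= Sig n m A c x).
   { intros x. assert (- Sig n m A c x <= l0) by (apply Hl1; exists x; ring). lra. }
   assert (Hgreat : forall b', (forall x, b' <= Sig n m A c x) -> b' <= - l0).
   { intros b' Hb'. assert (l0 <= - b'); [|lra]. apply Hl2. intros r [x Hx]. specialize (Hb' x). lra. }
   exists (Fin (- l0)). split; simpl.
   + split. intros y [x ->]. auto. intros b' Hb'. apply Hgreat. intros x. apply Hb'. exists x; auto.
   + split. intros g Hg. apply Hgreat. apply Hk. auto. intros b' Hb'. apply Hb'. apply Hk. auto.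
 - exists MInf. split; simpl.
   + intros M. apply NNPP. intro H. apply Hnb. exists M. intros x. apply Rnot_lt_le. intro. apply H.
     exists (Sig n m A c x). split; auto. exists x; auto.
   + intros g Hg. apply Hnb. exists g. apply Hk. auto.
Qed.

Lemma dot_scal y a s : dot m y (fun i => a * s i) = a * dot m y s.
Proof. unfold dot. rewrite <- sumR_scal. apply sumR_ext; intros; ring. Qed.

Lemma part2to3 : (forall c, C_NNS n m A c <-> C_SAGE n m A c) ->
  forall v : nat -> R, C_SAGE_dual n m A v -> v 0%nat = 1 -> cl_conv_exp_range n m A v.
Proof.
 intros H2 v Hv Hv0. apply NNPP. intro Hncl.
 destruct (separation m (cl_conv_exp_range n m A) v (cl_closed n m A) (cl_convex n m A Hm)
   (ex_intro _ _ (cl_of_conv n m A _ (conv_ev n m A (fun _ => 0)))) Hncl) as [y [d [Hd Hsep]]].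
 set (t := dot m y v + d).
 assert (Hc : C_NNS n m A (fun i => y i - t * e1 i)).
 { intros x. rewrite (Sig_shift n m A Hm Ha1).
   pose proof (Hsep _ (cl_of_conv n m A _ (conv_ev n m A x))). unfold ev in H. unfold Sig. unfold t. unfold dot in *. lra. }
 apply H2 in Hc. specialize (Hv _ Hc).
 rewrite (sumR_ext m _ (fun i => y i * v i + (- t) * (v i * e1 i))) in Hv by (intros; ring).
 rewrite sumR_plus, sumR_scal, (sum_e1 m Hm), Hv0 in Hv. fold (dot m y v) in Hv. unfold t in Hv. lra.
Qed.

Lemma part3to2 : (forall v : nat -> R, C_SAGE_dual n m A v -> v 0%nat = 1 -> cl_conv_exp_range n m A v) ->
  forall c, C_NNS n m A c <-> C_SAGE n m A c.
Proof.
 intros H3 c. split; [|apply SAGE_NNS]. intros Hc. apply NNPP. intro Hns.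
 destruct (separation m (C_SAGE n m A) c (SAGE_closed n m A Hdistinct) (SAGE_convex n m A)
   (ex_intro _ _ (SAGE_zero n m A Hm)) Hns) as [y [d [Hd Hsep]]].
 assert (Hyc : dot m y c + d <= 0).
 { pose proof (Hsep _ (SAGE_zero n m A Hm)). unfold dot in H at 2. rewrite sumR_zero in H by (intros; ring). exact H. }
 assert (Hcone : forall s, C_SAGE n m A s -> 0 <= dot m y s).
 { intros s Hs. apply Rnot_lt_le. intro Hneg.
   set (lam := (Rabs (dot m y c) + 1) / (- dot m y s)).
   assert (Hlam : 0 < lam) by (apply Rdiv_lt_0_compat; [pose proof (Rabs_pos (dot m y c)); lra| lra]).
   pose proof (Hsep _ (SAGE_scal n m A lam s ltac:(lra) Hs)). rewrite dot_scal in H.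
   assert (lam * dot m y s = - (Rabs (dot m y c) + 1)) by (unfold lam; field; lra).
   pose proof (Rle_abs (- dot m y c)). rewrite Rabs_Ropp in H1. lra. }
 assert (Hy0 : 0 <= y 0%nat).
 { pose proof (Hcone _ (SAGE_e1 n m A Hm Ha1)). unfold dot in H. rewrite (sum_e1 m Hm) in H. exact H. }
 set (Sc := sumR m c).
 set (eta := d / (2 * (Rabs Sc + 1))).
 assert (Heta : 0 < eta) by (apply Rdiv_lt_0_compat; [lra| pose proof (Rabs_pos Sc); lra]).
 set (a := y 0%nat + eta).
 assert (Ha : 0 < a) by (unfold a; lra).
 assert (Hdual : forall s, sumR m (fun i => (y i + eta) / a * s i) = / a * (dot m y s + eta * sumR m s)).
 { intros s. unfold dot. rewrite <- sumR_scal, <- sumR_plus, <- sumR_scal. apply sumR_ext. intros; field. lra. }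
 assert (Hvd : C_SAGE_dual n m A (fun i => (y i + eta) / a)).
 { intros s Hs. rewrite Hdual. apply Rmult_le_pos. left; apply Rinv_0_lt_compat; auto.
   pose proof (Hcone s Hs). pose proof (SAGE_NNS n m A s Hs (fun _ => 0)). rewrite Sig_at0 in H0.
   apply Rplus_le_le_0_compat; auto. apply Rmult_le_pos; lra. }
 specialize (H3 _ Hvd ltac:(unfold a; field; lra)).
 pose proof (cl_dual n m A _ c H3 Hc). rewrite Hdual in H. fold Sc in H.
 assert (eta * Sc <= d / 2).
 { pose proof (Rle_abs Sc). assert (eta * Sc <= eta * Rabs Sc) by (apply Rmult_le_compat_l; lra).
   assert (eta * Rabs Sc <= d / 2); [|lra]. unfold eta.
   apply (Rmult_le_reg_r (2 * (Rabs Sc + 1))). pose proof (Rabs_pos Sc); lra.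
   field_simplify; try (pose proof (Rabs_pos Sc); lra); try (pose proof (Rabs_pos Sc); nra). }
 assert (0 < / a) by (apply Rinv_0_lt_compat; auto).
 assert (/ a * (dot m y c + eta * Sc) < 0). { assert (dot m y c + eta * Sc < 0) by lra. nra. }
 lra.
Qed.

End T.

Theorem mainTheorem19 (n m : nat) (A : nat -> nat -> R)
  (Hm : (0 < m)%nat)
  (Hdistinct : forall j k, (j < m)%nat -> (k < m)%nat -> j <> k ->
                 exists i, (i < n)%nat /\ A i j <> A i k)
  (Ha1 : forall i, (i < n)%nat -> A i 0%nat = 0) :
  ((forall c : nat -> R, exists v : ExtR, f_star_is n m A c v /\ f_SAGE_is n m A c v)
   <-> (forall c : nat -> R, C_NNS n m A c <-> C_SAGE n m A c))
  /\
  ((forall c : nat -> R, C_NNS n m A c <-> C_SAGE n m A c)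
   <-> (forall v : nat -> R, C_SAGE_dual n m A v -> v 0%nat = 1 ->
          cl_conv_exp_range n m A v)).
Proof.
  split; split.
  - apply (part1to2 n m A Hm Hdistinct Ha1).
  - apply (part2to1 n m A Hm Ha1).
  - apply (part2to3 n m A Hm Ha1).
  - apply (part3to2 n m A Hm Hdistinct Ha1).
Qed.
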